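(* Let $C$ be a kernel configuration, $\mathbb V$ a $K$-vector space and $\theta:\mathbb V\to\mathbb V$ a $C$-endomorphism which is $C$-image-complete, and let $F\subseteq K[X]_{\mathrm{irr}}^{0<C<\infty}$ be finite. Then: (1) $\mathrm{Im}(\eta)=\mathrm{Im}(F^C)$ for every $\eta\in K[X]$ with $F^C\mid\eta$ and all monic irreducible factors of $\eta$ lying in $K[X]_{\mathrm{irr}}^{C=0}\cup F$; (2) $\mathbb V=\mathrm{Im}(F^C)\oplus\mathrm{Ker}(F^C)=\mathrm{Im}(F^C)\oplus\bigoplus_{f\in F}\mathrm{Ker}(f^{C(f)})$; (3) $\mathrm{Im}(F^C)=\mathrm{Im}(F'^C)\oplus\bigoplus_{f\in F'\setminus F}\mathrm{Ker}(f^{C(f)})$ for every finite $F'$ with $F\subseteq F'\subseteq K[X]_{\mathrm{irr}}^{0<C<\infty}$; (4) $\mathrm{Im}(g^{C(g)})=\mathrm{Im}(F^C)\oplus\bigoplus_{f\in F\setminus\{g\}}\mathrm{Ker}(f^{C(f)})$ for every $g\in F$.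
   Context: $K$ is a field, $K[X]_{\mathrm{irr}}$ the set of monic irreducible polynomials of $K[X]$. For $\rho=\sum_i(\rho)_iX^i$, $\rho[\theta]=\sum_i(\rho)_i\theta^i$; $\mathrm{Ker}(\rho),\mathrm{Im}(\rho)$ are kernel and image of $\rho[\theta]$. A kernel configuration is $C=(c,d)$ with $c:K[X]_{\mathrm{irr}}\to\mathbb N\cup\{\infty\}$, $d\in\mathbb N_{>0}\cup\{\infty\}$, $d=\infty$ or $d=\sum_f\deg(f)c(f)$; $C(f)=c(f)$. $C$ is algebraic if $d<\infty$ (with $\mathrm{MiPo}(C)=\prod_ff^{C(f)}$), transcendental otherwise. $\theta$ is a $C$-endomorphism if $\mathrm{MiPo}(C)[\theta]=0$ (algebraic case), resp. $\mathrm{Ker}(f^{C(f)})=\mathrm{Ker}(f^{C(f)+1})$ for all $f$ with $C(f)<\infty$ (transcendental case). $\theta$ is $C$-image-complete if $\mathrm{Im}(f^{C(f)})=\mathrm{Im}(f^{C(f)+1})$ for all $f\in K[X]_{\mathrm{irr}}$ with $C(f)<\infty$. Notation: $K[X]_{\mathrm{irr}}^{0<C<\infty}=\{f:0<C(f)<\infty\}$, $K[X]_{\mathrm{irr}}^{C=0}=\{f:C(f)=0\}$, and for finite $F\subseteq K[X]_{\mathrm{irr}}^{0<C<\infty}$, $F^C:=\prod_{f\in F}f^{C(f)}$. *)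

(* Defs.v *)
From HB Require Import structures.
From mathcomp Require Import all_boot all_order all_algebra.
From mathcomp Require Export finmap.
Set Implicit Arguments. Unset Strict Implicit. Unset Printing Implicit Defensive.
Import Order.TTheory GRing.Theory Num.Theory.
Local Open Scope ring_scope.

Section Defs.
Variables (K : fieldType) (V : lmodType K).

Definition peval (rho : {poly K}) (theta : V -> V) (v : V) : V :=
  \sum_(i < size rho) rho`_i *: iter i theta v.

(* subspaces are represented as predicates on V *)
Definition Ker (rho : {poly K}) (theta : V -> V) : V -> Prop :=
  fun v => peval rho theta v = 0.
Definition Im (rho : {poly K}) (theta : V -> V) : V -> Prop :=
  fun v => exists w, v = peval rho theta w.

Definition irr_monic (f : {poly K}) : Prop := f \is monic /\ irreducible_poly f.

(* kernel configuration C = (c, d); None encodes infinity *)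
Record kconfig := KConfig { kc_c : {poly K} -> option nat; kc_d : option nat }.

(* C(f) as a natural number, meaningful when C(f) < oo *)
Definition Cexp (C : kconfig) (f : {poly K}) : nat := odflt 0%N (kc_c C f).

Definition kc_support (C : kconfig) (s : seq {poly K}) : Prop :=
  uniq s /\ forall f, f \in s <-> (irr_monic f /\ kc_c C f <> Some 0%N).

Definition kconf (C : kconfig) : Prop :=
  match kc_d C with
  | None => True
  | Some n => (0 < n)%N /\ exists s, kc_support C s /\
       (forall f, f \in s -> kc_c C f <> None) /\
       n = (\sum_(f <- s) (size f).-1 * Cexp C f)%N
  end.

Definition MiPo (C : kconfig) (s : seq {poly K}) : {poly K} :=
  \prod_(f <- s) f ^+ Cexp C f.

Definition C_endo (C : kconfig) (theta : V -> V) : Prop :=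
  match kc_d C with
  | Some _ => forall s, kc_support C s -> forall v, peval (MiPo C s) theta v = 0
  | None => forall f n, irr_monic f -> kc_c C f = Some n ->
       forall v, Ker (f ^+ n) theta v <-> Ker (f ^+ n.+1) theta v
  end.

Definition C_image_complete (C : kconfig) (theta : V -> V) : Prop :=
  forall f n, irr_monic f -> kc_c C f = Some n ->
    forall v, Im (f ^+ n) theta v <-> Im (f ^+ n.+1) theta v.

Definition in_pos_fin (C : kconfig) (f : {poly K}) : Prop :=
  irr_monic f /\ exists n, kc_c C f = Some n /\ (0 < n)%N.

Definition FC (C : kconfig) (F : {fset {poly K}}) : {poly K} :=
  \prod_(f <- F) f ^+ Cexp C f.

Definition sumF (T : choiceType) (S : {fset T}) (W : T -> V -> Prop) : V -> Prop :=
  fun v => exists w : T -> V, (forall i, i \in S -> W i (w i)) /\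
                              v = \sum_(i <- S) w i.

Definition indepF (T : choiceType) (S : {fset T}) (W : T -> V -> Prop) : Prop :=
  forall w : T -> V, (forall i, i \in S -> W i (w i)) ->
    \sum_(i <- S) w i = 0 -> forall i, i \in S -> w i = 0.

Definition dsum2 (U A B : V -> Prop) : Prop :=
  (forall v, U v <-> exists a b, A a /\ B b /\ v = a + b) /\
  (forall v, A v -> B v -> v = 0).

Definition dsum_fam (T : choiceType) (U A : V -> Prop) (S : {fset T})
    (W : T -> V -> Prop) : Prop :=
  dsum2 U A (sumF S W) /\ indepF S W.

End Defs.

(* Main.v *)
Require Import Defs.
From HB Require Import structures.
From mathcomp Require Import all_boot all_order all_algebra finmap.
From mathcomp Require Import ring.
From Stdlib Require Import Classical.
From mathcomp Require Import zify.
Import GRing.Theory.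
Local Open Scope ring_scope.


Section Peval.
Variables (K : fieldType) (V : lmodType K) (theta : {linear V -> V}).
Notation P p := (peval p theta).

Lemma iter_lin i : linear (iter i theta).
Proof. elim: i => [|i IH] a x y //=. by rewrite IH linearP. Qed.

Lemma peval_wide (p : {poly K}) n0 v : (size p <= n0)%N ->
  P p v = \sum_(i < n0) p`_i *: iter i theta v.
Proof.
move=> hn; rewrite /peval (big_ord_widen n0 (fun i => p`_i *: iter i theta v) hn).
rewrite big_mkcond /=; apply: eq_bigr => i _; case: ifP => // /negbT.
by rewrite -leqNgt => /(nth_default 0) ->; rewrite scale0r.
Qed.

Lemma pevalD (p q : {poly K}) v : P (p + q) v = P p v + P q v.
Proof.
pose n := maxn (size p) (size q).
rewrite (@peval_wide _ n _) ?(leq_trans (size_polyD _ _)) //.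
rewrite (@peval_wide p n _) ?leq_maxl // (@peval_wide q n _) ?leq_maxr //.
by rewrite -big_split; apply: eq_bigr => i _; rewrite coefD scalerDl.
Qed.

Lemma pevalC c v : P c%:P v = c *: v.
Proof.
by rewrite (@peval_wide _ 1 _) ?size_polyC_leq1 // big_ord1 coefC /=.
Qed.

Lemma peval_lin (p : {poly K}) a x y : P p (a *: x + y) = a *: P p x + P p y.
Proof.
rewrite /peval scaler_sumr -big_split; apply: eq_bigr => i _ /=.
by rewrite iter_lin scalerDr !scalerA mulrC.
Qed.

Lemma pevalMX (p : {poly K}) v : P (p * 'X) v = P p (theta v).
Proof.
rewrite (@peval_wide _ (size p).+1 _); last first.
  by rewrite -[leqRHS]/((size p).+1) (leq_trans (size_polyMleq _ _)) // size_polyX addn2.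
rewrite big_ord_recl coefMX eqxx scale0r add0r /peval; apply: eq_bigr => i _.
by rewrite coefMX /= add0n -iterSr.
Qed.

Lemma pevalv0 (p : {poly K}) : P p 0 = 0.
Proof.
have := peval_lin p 1 0 0; rewrite scale1r addr0 -{1}[P p 0]addr0.
by rewrite scale1r => /addrI <-.
Qed.

Lemma pevalZv (p : {poly K}) a x : P p (a *: x) = a *: P p x.
Proof. by have := peval_lin p a x 0; rewrite addr0 pevalv0 addr0. Qed.

Lemma pevalDv (p : {poly K}) x y : P p (x + y) = P p x + P p y.
Proof. by have := peval_lin p 1 x y; rewrite !scale1r. Qed.

Lemma pevalBv (p : {poly K}) x y : P p (x - y) = P p x - P p y.
Proof. by rewrite pevalDv -scaleN1r pevalZv scaleN1r. Qed.

Lemma peval0 v : P 0 v = 0.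
Proof. by rewrite /peval size_poly0 big_ord0. Qed.

Lemma pevalZ c (p : {poly K}) v : P (c *: p) v = c *: P p v.
Proof.
rewrite (@peval_wide _ (size p) _) ?size_scale_leq // /peval scaler_sumr.
by apply: eq_bigr => i _; rewrite coefZ scalerA.
Qed.

Lemma pevalM (p q : {poly K}) v : P (p * q) v = P p (P q v).
Proof.
elim/poly_ind: q v => [|q c IH] v; first by rewrite mulr0 !peval0 pevalv0.
rewrite mulrDr mulrA pevalD pevalMX IH [p * _]mulrC mul_polyC pevalZ.
by rewrite pevalD pevalMX pevalC pevalDv pevalZv.
Qed.

Lemma peval1 v : P 1 v = v.
Proof. by rewrite pevalC scale1r. Qed.

Lemma pevalC' (p q : {poly K}) v : P p (P q v) = P q (P p v).
Proof. by rewrite -!pevalM mulrC. Qed.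

Lemma pevalB (p q : {poly K}) v : P (p - q) v = P p v - P q v.
Proof. by rewrite pevalD -[- q]scaleN1r pevalZ scaleN1r. Qed.

End Peval.

Section Sub.
Variables (K : fieldType) (V : lmodType K) (theta : {linear V -> V}).
Notation P p := (peval p theta).
Notation KER p := (Ker p theta).
Notation IM p := (Im p theta).

Lemma bez (p q : {poly K}) : coprimep p q -> exists a b, a * p + b * q = 1.
Proof. by move=> /Bezout_eq1_coprimepP [[a b] /= h]; exists a, b. Qed.

Lemma decomp {a p b q : {poly K}} x : a * p + b * q = 1 ->
  x = P (a * p) x + P (b * q) x.
Proof. by move=> h; rewrite -pevalD h peval1. Qed.

Lemma ker_split (p q : {poly K}) x : coprimep p q -> KER (p * q) x ->
  exists y z, KER p y /\ KER q z /\ x = y + z.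
Proof.
move=> /bez [a [b h]] hx; rewrite /Ker in hx; exists (P (b * q) x), (P (a * p) x); split; last split.
- by rewrite /Ker -pevalM mulrCA pevalM hx pevalv0.
- by rewrite /Ker -pevalM mulrCA pevalM [q * p]mulrC hx pevalv0.
- by rewrite addrC; apply: decomp.
Qed.

Lemma ker_cap (p q : {poly K}) x : coprimep p q -> KER p x -> KER q x -> x = 0.
Proof.
move=> /bez [a [b h]] hp hq; rewrite /Ker in hp hq.
by rewrite (decomp x h) !pevalM hp hq !pevalv0 addr0.
Qed.

Lemma ker_mull (p q : {poly K}) x : KER q x -> KER (p * q) x.
Proof. by rewrite /Ker pevalM => ->; rewrite pevalv0. Qed.

Lemma ker_mulr (p q : {poly K}) x : KER p x -> KER (p * q) x.
Proof. by rewrite mulrC; apply: ker_mull. Qed.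

Lemma im_mull (p q : {poly K}) x : IM (p * q) x -> IM p x.
Proof. by move=> [w ->]; exists (P q w); rewrite pevalM. Qed.

Lemma im_mulr (p q : {poly K}) x : IM (p * q) x -> IM q x.
Proof. by rewrite mulrC; apply: im_mull. Qed.

Lemma im_cap (p q : {poly K}) x : coprimep p q -> IM p x -> IM q x -> IM (p * q) x.
Proof.
move=> /bez [a [b h]] [y hy] [z hz]; exists (P a z + P b y).
rewrite {1}(decomp x h) pevalDv; congr (_ + _).
- by rewrite {1}hz -!pevalM; congr (P _ _); ring.
- by rewrite {1}hy -!pevalM; congr (P _ _); ring.
Qed.

Lemma ker_im (p q : {poly K}) x : coprimep p q -> KER q x -> IM p x.
Proof.
move=> /bez [a [b h]] hq; exists (P a x).
rewrite /Ker in hq; rewrite {1}(decomp x h) [P (b * q) x]pevalM hq pevalv0 addr0 -pevalM; congr (P _ _); ring.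
Qed.

Definition stable (Q : {poly K}) :=
  (forall x, KER (Q * Q) x -> KER Q x) /\ (forall x, IM Q x -> IM (Q * Q) x).

Lemma fitting Q : stable Q -> dsum2 (fun _ => True) (IM Q) (KER Q).
Proof.
move=> [hk hi]; split.
- move=> v; split => // _.
  have [y hy] : IM (Q * Q) (P Q v) by apply: hi; exists v.
  exists (P Q y), (v - P Q y); split; first by exists y.
  split; last by rewrite addrC subrK.
  by rewrite /Ker pevalBv hy pevalM subrr.
- move=> v [y ->] hv; apply: hk.
  by rewrite /Ker pevalM.
Qed.

Lemma stableM (p q : {poly K}) : coprimep p q -> stable p -> stable q -> stable (p * q).
Proof.
move=> co [kp ip] [kq iq]; split.
- move=> x hx.
  have h1 : KER (p * p) (P (q * q) x).
    by rewrite /Ker -pevalM -hx; congr (P _ x); rewrite mulrACA.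
  have h2 : KER (q * q) (P p x).
    move: (kp _ h1); rewrite /Ker -!pevalM => <-; congr (P _ x).
    by rewrite mulrC.
  move: (kq _ h2); rewrite /Ker -!pevalM => <-; congr (P _ x).
  by rewrite mulrC.
- move=> x hx.
  have co2 : coprimep (p * p) (q * q).
    by rewrite -!expr2; apply: coprimep_expl; apply: coprimep_expr.
  have := im_cap _ _ _ co2 (ip _ (im_mull _ _ _ hx)) (iq _ (im_mulr _ _ _ hx)).
  by rewrite mulrACA.
Qed.
End Sub.

Section Poly.
Variable K : fieldType.

Lemma coprime_irr (f g : {poly K}) : irr_monic f -> irr_monic g -> f != g -> coprimep f g.
Proof.
move=> [mf irf] [mg irg] ne; rewrite irreducible_poly_coprime //.
apply/negP => dv; have hs : size f != 1.
  by case: irf => h _; rewrite neq_ltn h orbT.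
have := apply_irredp irg hs dv; rewrite eqp_monic // => /eqP e.
by rewrite e eqxx in ne.
Qed.

Variable C : kconfig K.
Definition prodC (s : seq {poly K}) := \prod_(f <- s) f ^+ Cexp C f.

Lemma prodC_cons a s : prodC (a :: s) = a ^+ Cexp C a * prodC s.
Proof. by rewrite /prodC big_cons. Qed.

Lemma coprime_prod a n s : irr_monic a -> a \notin s -> (forall f, f \in s -> irr_monic f) ->
  coprimep (a ^+ n) (prodC s).
Proof.
move=> ia; elim: s => [|b s IH] ha hs; first by rewrite /prodC big_nil coprimep1.
rewrite prodC_cons coprimepMr; apply/andP; split.
  apply: coprimep_expl; apply: coprimep_expr; apply: coprime_irr => //.
    by apply: hs; rewrite mem_head.
  by apply: contra ha => /eqP ->; rewrite mem_head.
apply: IH; first by apply: contra ha => h; rewrite in_cons h orbT.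
by move=> f hf; apply: hs; rewrite in_cons hf orbT.
Qed.

Lemma coprime_prods s t : (forall f, f \in s -> irr_monic f) -> (forall f, f \in t -> irr_monic f) ->
  (forall f, f \in s -> f \notin t) -> coprimep (prodC s) (prodC t).
Proof.
elim: s => [|b s IH] hs ht hst; first by rewrite /prodC big_nil coprime1p.
rewrite prodC_cons coprimepMl; apply/andP; split.
  apply: coprime_prod => //; [apply: hs | apply: hst]; by rewrite mem_head.
apply: IH => // f hf; [apply: hs | apply: hst]; by rewrite in_cons hf orbT.
Qed.
End Poly.

Arguments ker_split {K V theta p q x}.
Arguments ker_cap {K V theta p q x}.
Arguments ker_mull {K V theta} p {q x}.
Arguments ker_mulr {K V theta p} q {x}.
Arguments im_mull {K V theta p q x}.
Arguments im_mulr {K V theta p q x}.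
Arguments im_cap {K V theta p q x}.
Arguments ker_im {K V theta p q x}.
Arguments fitting {K V theta Q}.
Arguments stable {K V} theta Q.
Arguments stableM {K V theta p q}.
Section Main.
Variables (K : fieldType) (V : lmodType K) (theta : {linear V -> V}) (C : kconfig K).
Notation P p := (peval p theta).
Notation KER p := (Ker p theta).
Notation IM p := (Im p theta).
Notation PC := (@prodC K C).

Lemma kerS : kconf C -> C_endo C theta -> forall f n, irr_monic f -> kc_c C f = Some n ->
  forall x, KER (f ^+ n.+1) x -> KER (f ^+ n) x.
Proof.
rewrite /kconf /C_endo; case: (kc_d C) => [d|]; last first.
  by move=> _ h f n hf hn x; apply: (proj2 (h f n hf hn x)).
move=> [_ [s [[us hs] _]]] he f n hf hn x hx.
have hM := he s (conj us hs) x.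
have irs : forall g, g \in s -> irr_monic g by move=> g /hs [].
set y := P (f ^+ n) x.
have hfy : KER f y by rewrite /Ker /y -pevalM -exprS.
case fs : (f \in s).
- have hp := perm_to_rem fs.
  have e : MiPo C s = f ^+ n * PC (rem f s).
    rewrite /MiPo (perm_big _ hp) big_cons /Cexp hn //.
  have co : coprimep (f ^+ 1) (PC (rem f s)).
    apply: coprime_prod => //; first by rewrite mem_rem_uniqF.
    by move=> g /mem_rem; apply: irs.
  rewrite expr1 in co.
  apply: (ker_cap co hfy).
  by rewrite /Ker /y -pevalM mulrC -e.
- have n0 : n = 0%N.
    have : ~ (irr_monic f /\ kc_c C f <> Some 0%N) by move=> /hs; rewrite fs.
    rewrite hn => h; apply/eqP; apply/negPn/negP => nz; apply: h; split => // [[e]].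
    by rewrite e eqxx in nz.
  subst n.
  have co : coprimep (f ^+ 1) (MiPo C s).
    by apply: coprime_prod => //; rewrite fs.
  rewrite expr1 in co.
  apply: (ker_cap co hfy).
  by rewrite /Ker /y expr0 peval1.
Qed.

Lemma stable_pow f n : kconf C -> C_endo C theta -> C_image_complete C theta ->
  irr_monic f -> kc_c C f = Some n -> stable theta (f ^+ n).
Proof.
move=> kc ce ci hf hn; split.
- have kk : forall k x, KER (f ^+ (n + k)) x -> KER (f ^+ n) x.
    elim=> [|k IH] x; first by rewrite addn0.
    move=> hx; apply: IH; rewrite /Ker.
    have : KER (f ^+ n.+1) (P (f ^+ k) x).
      by rewrite /Ker -pevalM -exprD addSn -addnS.
    by move/(kerS kc ce _ _ hf hn); rewrite /Ker -pevalM -exprD.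
  by move=> x; rewrite -exprD; apply: kk.
- have ii : forall k x, IM (f ^+ n) x -> IM (f ^+ (n + k)) x.
    elim=> [|k IH] x; first by rewrite addn0.
    move=> /IH [y ->].
    have [z hz] : IM (f ^+ n.+1) (P (f ^+ n) y).
      by apply/(ci f n hf hn); exists y.
    exists z; rewrite exprD mulrC pevalM hz -!pevalM; congr (P _ z).
    by rewrite -!exprD addnS -addSn addnC.
  by move=> x; rewrite -exprD; apply: ii.
Qed.

Definition W (f : {poly K}) := KER (f ^+ Cexp C f).

Lemma pf_exp f : in_pos_fin C f -> kc_c C f = Some (Cexp C f).
Proof. by move=> [_ [n [h _]]]; rewrite /Cexp h. Qed.

Lemma stable_prod s : kconf C -> C_endo C theta -> C_image_complete C theta ->
  uniq s -> (forall f, f \in s -> in_pos_fin C f) -> stable theta (PC s).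
Proof.
move=> kc ce ci; elim: s => [|a s IH] us hs.
  rewrite /prodC big_nil; split => x; rewrite mulr1 //.
rewrite prodC_cons; move: us => /= /andP [ns us].
have ha : in_pos_fin C a by apply: hs; rewrite mem_head.
have hs' : forall f, f \in s -> in_pos_fin C f by move=> f hf; apply: hs; rewrite in_cons hf orbT.
apply: stableM.
- apply: coprime_prod => //; first by case: ha.
  by move=> f /hs' [].
- by apply: (stable_pow _ _ kc ce ci); [case: ha | apply: pf_exp].
- by apply: IH.
Qed.

Lemma ker_sum s : uniq s -> (forall f, f \in s -> irr_monic f) ->
  forall x, KER (PC s) x <-> exists w : {poly K} -> V, (forall i, i \in s -> W i (w i)) /\
     x = \sum_(i <- s) w i.
Proof.
elim: s => [|a s IH] us hs x.
  rewrite /prodC big_nil; split.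
    by rewrite /Ker peval1 => ->; exists (fun _ => 0); rewrite big_nil.
  by move=> [w [_ ->]]; rewrite big_nil /Ker pevalv0.
move: us => /= /andP [ns us].
have ha : irr_monic a by apply: hs; rewrite mem_head.
have hs' : forall f, f \in s -> irr_monic f by move=> f hf; apply: hs; rewrite in_cons hf orbT.
have co : coprimep (a ^+ Cexp C a) (PC s) by apply: coprime_prod.
rewrite prodC_cons; split.
- move=> /(ker_split co) [y [z [hy [hz ->]]]].
  have [w' [hw' ->]] := (IH us hs' z).1 hz.
  exists (fun i => if i == a then y else w' i); split.
    move=> i; rewrite in_cons; case: eqP => [-> //|ne] /= hi; exact: hw'.
  rewrite big_cons eqxx; congr (_ + _); apply: eq_big_seq => i hi.
  by case: eqP => // e; move: ns; rewrite -e hi.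
- move=> [w [hw ->]]; rewrite big_cons /Ker pevalDv.
  have h1 : KER (a ^+ Cexp C a * PC s) (w a).
    by apply: ker_mulr; apply: hw; rewrite mem_head.
  have h2 : KER (a ^+ Cexp C a * PC s) (\sum_(i <- s) w i).
    apply: ker_mull; apply/(IH us hs'); exists w; split => // i hi.
    by apply: hw; rewrite in_cons hi orbT.
  by rewrite h1 h2 addr0.
Qed.

Lemma indep_seq s : uniq s -> (forall f, f \in s -> irr_monic f) ->
  forall w : {poly K} -> V, (forall i, i \in s -> W i (w i)) ->
  \sum_(i <- s) w i = 0 -> forall i, i \in s -> w i = 0.
Proof.
elim: s => [|a s IH] us hs w hw //.
move: us => /= /andP [ns us].
have ha : irr_monic a by apply: hs; rewrite mem_head.
have hs' : forall f, f \in s -> irr_monic f by move=> f hf; apply: hs; rewrite in_cons hf orbT.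
have co : coprimep (a ^+ Cexp C a) (PC s) by apply: coprime_prod.
have hw' : forall i, i \in s -> W i (w i) by move=> i hi; apply: hw; rewrite in_cons hi orbT.
rewrite big_cons => hsum.
have wa0 : w a = 0.
  apply: (ker_cap co); first by apply: hw; rewrite mem_head.
  have -> : w a = - \sum_(i <- s) w i by apply/eqP; rewrite -addr_eq0 hsum.
  rewrite /Ker -scaleN1r pevalZv.
  have h := (ker_sum _ us hs' (\sum_(i <- s) w i)).2 (ex_intro _ w (conj hw' erefl)).
  by rewrite /Ker in h; rewrite h scaler0.
have s0 : \sum_(i <- s) w i = 0 by move: hsum; rewrite wa0 add0r.
move=> i; rewrite in_cons => /orP [/eqP -> //|hi].
exact: (IH us hs' w hw' s0).
Qed.

Lemma im_sub (p : {poly K}) x y : IM p x -> IM p y -> IM p (x - y).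
Proof. by move=> [a ->] [b ->]; exists (a - b); rewrite pevalBv. Qed.

Lemma im_add (p : {poly K}) x y : IM p x -> IM p y -> IM p (x + y).
Proof. by move=> [a ->] [b ->]; exists (a + b); rewrite pevalDv. Qed.

Lemma G3 sP sQ : kconf C -> C_endo C theta -> C_image_complete C theta ->
  uniq sQ -> (forall f, f \in sP -> in_pos_fin C f) -> (forall f, f \in sQ -> in_pos_fin C f) ->
  (forall f, f \in sP -> f \notin sQ) ->
  dsum2 (IM (PC sP)) (IM (PC sP * PC sQ)) (KER (PC sQ)).
Proof.
move=> kc ce ci uQ hP hQ dj.
have co : coprimep (PC sP) (PC sQ).
  by apply: coprime_prods => // f; [move/hP => [] | move/hQ => []].
have [fQ1 fQ2] := fitting (stable_prod _ kc ce ci uQ hQ).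
split.
- move=> x; split.
  + move=> hx; have [a [b [ha [hb ex]]]] := (fQ1 x).1 I.
    have hbP : IM (PC sP) b := ker_im co hb.
    have haP : IM (PC sP) a.
      by have := im_sub _ _ _ hx hbP; rewrite ex addrK.
    by exists a, b; split => //; apply: im_cap.
  + move=> [a [b [ha [hb ->]]]]; apply: im_add; first exact: im_mull ha.
    exact: ker_im co hb.
- by move=> v hv hk; apply: fQ2 hk; apply: im_mulr hv.
Qed.

Lemma key_step s g : C_image_complete C theta -> uniq s ->
  (forall f, f \in s -> in_pos_fin C f) -> irr_monic g ->
  (kc_c C g = Some 0%N \/ g \in s) -> forall v, IM (PC s) v -> IM (g * PC s) v.
Proof.
move=> ci us hs hg [h0|gs] v [w ->].
- have [z hz] : IM (g ^+ 1) w by apply/(ci g 0%N hg h0); exists w; rewrite expr0 peval1.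
  by exists z; rewrite hz -pevalM expr1 mulrC.
- have hp := perm_to_rem gs.
  have e : PC s = g ^+ Cexp C g * PC (rem g s).
    by rewrite /prodC (perm_big _ hp) big_cons.
  have hgn := pf_exp _ (hs _ gs).
  have co : coprimep (g ^+ (Cexp C g).+1) (PC (rem g s)).
    apply: coprime_prod => //; first by rewrite mem_rem_uniqF.
    by move=> f /mem_rem /hs [].
  have i1 : IM (g ^+ (Cexp C g).+1) (P (PC s) w).
    by apply/(ci g _ hg hgn); rewrite e; apply: im_mull; exists w.
  have i2 : IM (PC (rem g s)) (P (PC s) w).
    by rewrite e mulrC; apply: im_mull; exists w.
  by have := im_cap co i1 i2; rewrite exprS -mulrA -e.
Qed.

Lemma im_scale (c : K) (q : {poly K}) v : c != 0 -> IM q v -> IM (c%:P * q) v.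
Proof.
move=> c0 [w ->]; exists (c^-1 *: w).
by rewrite pevalM pevalC pevalZv scalerA divff // scale1r.
Qed.

Lemma part1 s : C_image_complete C theta -> uniq s -> (forall f, f \in s -> in_pos_fin C f) ->
  forall eta : {poly K}, eta != 0 -> PC s %| eta ->
  (forall g, irr_monic g -> g %| eta -> kc_c C g = Some 0%N \/ g \in s) ->
  forall v, IM eta v <-> IM (PC s) v.
Proof.
move=> ci us hs eta nz /dvdpP [h eh] hg v; split; first by rewrite eh; apply: im_mulr.
have hnz : h != 0 by apply: contra nz => /eqP e; rewrite eh e mul0r.
have hgh : forall g, irr_monic g -> g %| h -> kc_c C g = Some 0%N \/ g \in s.
  by move=> g ig dg; apply: hg => //; rewrite eh; apply: dvdp_mulr.
suff T : forall n (h : {poly K}), (size h < n)%N -> h != 0 ->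
    (forall g, irr_monic g -> g %| h -> kc_c C g = Some 0%N \/ g \in s) ->
    forall v, IM (PC s) v -> IM (h * PC s) v.
  by rewrite eh; apply: (T (size h).+1).
clear eh hnz hgh hg v h; elim=> [//|n IH] h sz hnz hgh v hv.
case: (leqP (size h) 1) => s1.
  rewrite (size1_polyC s1); apply: im_scale => //.
  by apply: contra hnz => /eqP e; rewrite (size1_polyC s1) e.
case: (classic (irreducible_poly h)) => irr.
  set c := lead_coef h.
  have c0 : c != 0 by rewrite lead_coef_eq0.
  set g := c^-1 *: h.
  have eg : h = c%:P * g by rewrite mul_polyC /g scalerA divff // scale1r.
  have ci0 : c^-1 != 0 by rewrite invr_neq0.
  have gh : g %| h by rewrite /g dvdpZl.
  have ig : irr_monic g.
    split; first by rewrite monicE /g lead_coefZ mulVf.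
    split; first by rewrite /g size_scale.
    move=> q q1 qg; have qh : q %| h by apply: dvdp_trans qg gh.
    have := irr.2 q q1 qh => e; apply: eqp_trans e _.
    by rewrite eqp_sym /g eqp_scale.
  rewrite eg -mulrA; apply: im_scale => //.
  by apply: key_step => //; apply: hgh.
have [q [q1 [qh nq]]] : exists q : {poly K}, size q != 1%N /\ q %| h /\ ~~ (q %= h).
  apply: NNPP => hn; apply: irr; split => // q q1 qh.
  apply: NNPP => nq; apply: hn; exists q; split => //; split => //; exact/negP.
have q0 : q != 0 by apply: contraTneq qh => ->; rewrite dvd0p.
have sq : (size q < size h)%N.
  rewrite ltn_neqAle dvdp_leq // andbT dvdp_size_eqp //; exact: nq.
set r := h %/ q.
have er : h = r * q by rewrite /r divpK.
have r0 : r != 0 by apply: contra hnz => /eqP e; rewrite er e mul0r.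
have sr : (size r < size h)%N.
  rewrite er size_mul //.
  have : (1 < size q)%N by rewrite ltn_neqAle eq_sym q1 /= size_poly_gt0.
  move: (size q) => k; case: k => [|[|k]] // _; rewrite !addnS /= ltnS; exact: leq_addr.
have hq : forall g, irr_monic g -> g %| q -> kc_c C g = Some 0%N \/ g \in s.
  by move=> g ig gq; apply: hgh => //; apply: dvdp_trans gq qh.
have hr : forall g, irr_monic g -> g %| r -> kc_c C g = Some 0%N \/ g \in s.
  by move=> g ig gr; apply: hgh => //; rewrite er; apply: dvdp_mulr.
have [w ew] := IH q (leq_trans sq sz) q0 hq v hv.
have [u eu] := IH r (leq_trans sr sz) r0 hr (P (PC s) w) (ex_intro _ w erefl).
exists u; rewrite ew pevalM eu -!pevalM er; congr (P _ u); ring.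
Qed.
End Main.
Arguments stable_prod {K V theta C} s.
Arguments ker_sum {K V theta C s}.
Arguments indep_seq {K V theta C s}.
Arguments G3 {K V theta C} sP sQ.
Arguments part1 {K V theta C} s.

Lemma dsum2_extB (K : fieldType) (V : lmodType K) (U A B B' : V -> Prop) :
  (forall v, B v <-> B' v) -> dsum2 U A B -> dsum2 U A B'.
Proof.
move=> e [h1 h2]; split.
- move=> v; rewrite h1; split; move=> [a [b [ha [hb ->]]]]; exists a, b; split => //;
  split => //; by apply/e.
- by move=> v ha /e; apply: h2.
Qed.

Local Open Scope fset_scope.

Theorem lemma3p13 (K : fieldType) (V : lmodType K) (C : kconfig K)
    (theta : {linear V -> V}) (F : {fset {poly K}}) :
  kconf C -> C_endo C theta -> C_image_complete C theta ->
  (forall f, f \in F -> in_pos_fin C f) ->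
  (* (1) *)
  (forall eta : {poly K}, eta != 0 -> FC C F %| eta ->
     (forall g, irr_monic g -> g %| eta -> kc_c C g = Some 0%N \/ g \in F) ->
     forall v, Im eta theta v <-> Im (FC C F) theta v) /\
  (* (2) *)
  dsum2 (fun _ => True) (Im (FC C F) theta) (Ker (FC C F) theta) /\
  dsum_fam (fun _ => True) (Im (FC C F) theta) F
    (fun f => Ker (f ^+ Cexp C f) theta) /\
  (* (3) *)
  (forall F' : {fset {poly K}}, F `<=` F' -> (forall f, f \in F' -> in_pos_fin C f) ->
     dsum_fam (Im (FC C F) theta) (Im (FC C F') theta) (F' `\` F)
       (fun f => Ker (f ^+ Cexp C f) theta)) /\
  (* (4) *)
  (forall g, g \in F ->
     dsum_fam (Im (g ^+ Cexp C g) theta) (Im (FC C F) theta) (F `\ g)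
       (fun f => Ker (f ^+ Cexp C f) theta)).

Proof.
move=> kc ce ci hF.
have uF : uniq F := fset_uniq F.
have iF : forall f, f \in F -> irr_monic f by move=> f /hF [].
have W2 : forall (S : {fset {poly K}}), (forall f, f \in S -> in_pos_fin C f) ->
  dsum2 (fun _ => True) (Im (@prodC K C S) theta) (Ker (@prodC K C S) theta) ->
  dsum_fam (fun _ => True) (Im (@prodC K C S) theta) S (fun f => Ker (f ^+ Cexp C f) theta).
  move=> S hS hd; split.
    by apply: dsum2_extB hd => v; apply: ker_sum; [exact: fset_uniq | move=> f /hS []].
  by move=> w hw; apply: indep_seq; [exact: fset_uniq | move=> f /hS [] | exact: hw].
have D2 : dsum2 (fun _ => True) (Im (FC C F) theta) (Ker (FC C F) theta).
  exact: fitting (stable_prod _ kc ce ci uF hF).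
split.
  move=> eta nz dv hg v; exact: (part1 (enum_fset F) ci uF hF eta nz dv hg v).
split; first exact: D2.
split; first exact: W2.
split.
- move=> F' sub hF'.
  have hD : forall f, f \in F' `\` F -> in_pos_fin C f.
    by move=> f; rewrite in_fsetD => /andP [_ /hF'].
  have pe : perm_eq F' (enum_fset F ++ enum_fset (F' `\` F)).
    apply: uniq_perm; first exact: fset_uniq.
      rewrite cat_uniq fset_uniq fset_uniq /= andbT.
      by apply/hasPn => f; rewrite in_fsetD => /andP [].
    move=> f; rewrite mem_cat in_fsetD.
    case fF: (f \in F) => //=; by move/fsubsetP: sub => /(_ f fF) ->.
  have e : FC C F' = @prodC K C F * @prodC K C (F' `\` F).
    by rewrite /FC (perm_big _ pe) big_cat.
  rewrite e; split.
    apply: dsum2_extB; last first.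
      apply: G3 => //; first exact: fset_uniq.
      by move=> f fF; rewrite in_fsetD fF.
    by move=> v; apply: ker_sum; [exact: fset_uniq | move=> f /hD []].
  by move=> w hw; apply: indep_seq; [exact: fset_uniq | move=> f /hD [] | exact: hw].
- move=> g gF.
  have hD : forall f, f \in F `\ g -> in_pos_fin C f.
    by move=> f; rewrite in_fsetD1 => /andP [_ /hF].
  have e1 : @prodC K C [:: g] = g ^+ Cexp C g by rewrite /prodC big_seq1.
  have e2 : FC C F = g ^+ Cexp C g * @prodC K C (F `\ g) by rewrite /FC (big_fsetD1 _ gF).
  split.
    apply: dsum2_extB; last first.
      have := G3 [:: g] (F `\ g) kc ce ci (fset_uniq _).
      rewrite e1 e2; apply.
      - by move=> f; rewrite inE => /eqP ->; apply: hF.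
      - exact: hD.
      - by move=> f; rewrite inE => /eqP ->; rewrite fsetD11.
    by move=> v; apply: ker_sum; [exact: fset_uniq | move=> f /hD []].
  by move=> w hw; apply: indep_seq; [exact: fset_uniq | move=> f /hD [] | exact: hw].
Qed.
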